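(* Let $k=2r+1$ with $r\geq1$ and $G=BS(1,k)$. Let $c_0(n)$ be the number of conjugacy classes of $G$ contained in the subgroup $\mathbb{Z}[1/k]$ whose length with respect to $\{a,t\}$ is $n$. Then the growth rate $\limsup_n c_0(n)^{1/n}$ of these conjugacy classes lies in the open interval $(\frac{4}{3},2)$.
   Context: $BS(1,k)=\langle a,t\mid tat^{-1}=a^k\rangle\cong \mathbb{Z}[1/k]\rtimes\mathbb{Z}$ via $a\mapsto(1,0)$, $t\mapsto(0,1)$, with the generator of $\mathbb{Z}$ acting by multiplication by $k$; $\mathbb{Z}[1/k]=\{(x,0)\}$ is a normal subgroup. The length of a conjugacy class is the minimal word length of its elements. The growth rate is the reciprocal of the radius of convergence of $\sum c_0(n)z^n$. *)

(* Defs.v *)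
From HB Require Import structures.
From mathcomp Require Import all_boot all_order all_algebra.
From mathcomp Require Import all_classical all_reals.
From mathcomp Require Import finmap ereal topology normedtype sequences exp.
Set Implicit Arguments. Unset Strict Implicit. Unset Printing Implicit Defensive.
Import Order.TTheory GRing.Theory Num.Theory.
Local Open Scope ring_scope.
Local Open Scope classical_set_scope.

(* BS(1,k) = Z[1/k] ⋊ Z, modelled inside rat * int.  An element (x, m)
   with x in Z[1/k]; the generator of Z acts on Z[1/k] by multiplication by k. *)

Definition Zinvk (k : nat) (x : rat) : Prop :=
  exists (z : int) (j : nat), x = z%:~R / (k%:R ^+ j).

Definition BS_elt (k : nat) (p : rat * int) : Prop := Zinvk k p.1.

Definition bs_mul (k : nat) (p q : rat * int) : rat * int :=
  (p.1 + (k%:R : rat) ^ p.2 * q.1, p.2 + q.2)%R.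
Definition bs_one : rat * int := (0, 0).
Definition bs_inv (k : nat) (p : rat * int) : rat * int :=
  (- ((k%:R : rat) ^ (- p.2) * p.1), - p.2)%R.

Definition bs_a : rat * int := (1, 0).
Definition bs_t : rat * int := (0, 1).

Inductive letter := La | LaI | Lt | LtI.

Definition letter_val (k : nat) (l : letter) : rat * int :=
  match l with
  | La => bs_a
  | LaI => bs_inv k bs_a
  | Lt => bs_t
  | LtI => bs_inv k bs_t
  end.

Definition word_eval (k : nat) (w : seq letter) : rat * int :=
  foldr (fun l acc => bs_mul k (letter_val k l) acc) bs_one w.

Definition conjclass (k : nat) (g : rat * int) : set (rat * int) :=
  [set bs_mul k (bs_mul k h g) (bs_inv k h) | h in BS_elt k].

Definition Zinvk_sub (k : nat) : set (rat * int) :=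
  [set p | Zinvk k p.1 /\ p.2 = 0%R].

Definition class_length (k : nat) (C : set (rat * int)) (n : nat) : Prop :=
  (exists w : seq letter, size w = n /\ C (word_eval k w)) /\
  (forall w : seq letter, C (word_eval k w) -> (n <= size w)%N).

Definition classes0 (k n : nat) : set (set (rat * int)) :=
  [set C | exists g, BS_elt k g /\ C = conjclass k g /\
                     C `<=` Zinvk_sub k /\ class_length k C n].

Definition c0 (k n : nat) : nat := (#|` fset_set (classes0 k n) |)%fset.

Definition growth0 (R : realType) (k : nat) : \bar R :=
  limn_esup (fun n => (((c0 k n)%:R : R) `^ (n%:R^-1))%:E).

(* Main.v *)
Require Import Defs.
From HB Require Import structures.
From mathcomp Require Import all_boot all_order all_algebra finmap.
From mathcomp Require Import all_classical all_reals.
From mathcomp Require Import ereal topology normedtype sequences exp.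
From mathcomp Require Import zify lra ring.
Import Order.TTheory GRing.Theory Num.Theory.
Local Open Scope ring_scope.

Section P1.
Variable k : nat.
Hypothesis k3 : (3 <= k)%N.
Local Notation K := (k%:R : rat).

Lemma K0 : K != 0.
Proof. by rewrite pnatr_eq0 -lt0n (leq_trans _ k3). Qed.

Fixpoint lval (L : seq int) : rat :=
  if L is d :: L' then (d%:~R + lval L') / K else 0.
Fixpoint rval (R : seq int) : rat :=
  if R is d :: R' then K * (d%:~R + rval R') else 0.
Fixpoint sabs (s : seq int) : nat :=
  if s is d :: s' then (`|d|%N + sabs s')%N else 0%N.

Definition Good (m : nat) (p : rat * int) : Prop :=
  exists L c R, p.1 = c%:~R + lval L + rval R /\
    (- (size L)%:Z <= p.2 <= (size R)%:Z) /\
    (sabs L + `|c| + sabs R + 2 * (size L + size R) <= m + `|p.2|)%N.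

Lemma ev_cons l w : word_eval k (l :: w) = bs_mul k (letter_val k l) (word_eval k w).
Proof. by []. Qed.

Lemma mul_a p : bs_mul k (letter_val k La) p = (1 + p.1, p.2).
Proof. by case: p => x e; rewrite /bs_mul /= expr0z mul1r add0r. Qed.
Lemma mul_aI p : bs_mul k (letter_val k LaI) p = (-1 + p.1, p.2).
Proof. by case: p => x e; rewrite /bs_mul /= oppr0 expr0z !mul1r add0r. Qed.
Lemma mul_t p : bs_mul k (letter_val k Lt) p = (K * p.1, 1 + p.2).
Proof. by case: p => x e; rewrite /bs_mul /= expr1z add0r. Qed.
Lemma mul_tI p : bs_mul k (letter_val k LtI) p = (K^-1 * p.1, -1 + p.2).
Proof.
case: p => x e; rewrite /bs_mul /= mulr0 oppr0 add0r.
by rewrite exprN1.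
Qed.

Lemma good_nil : Good 0 (word_eval k [::]).
Proof. by exists [::], 0%R, [::]; rewrite /= !addr0. Qed.

Lemma good_cons m l p : Good m p -> Good m.+1 (bs_mul k (letter_val k l) p).
Proof.
case: p => x e [L [c [R [/= hx [he hc]]]]].
case: l.
- rewrite mul_a /=; exists L, (1 + c), R; split; [|split=>//].
    by rewrite hx rmorphD /= !addrA.
  simpl in *; simpl in *; lia.
- rewrite mul_aI /=; exists L, (-1 + c), R; split; [|split=>//].
    by rewrite hx rmorphD /= !addrA.
  simpl in *; simpl in *; lia.
- rewrite mul_t /=; case: L hx he hc => [|d L] hx he hc.
  + exists [::], 0, (c :: R); split; [|split].
      by rewrite hx /= !addr0 add0r.
    move: he; rewrite /=; simpl in *; lia.
    move: hc he; rewrite /=; simpl in *; lia.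
  + exists L, d, (c :: R); split; [|split].
      rewrite hx /= mulrDr mulrDr [K * (_ / K)]mulrC -mulrA mulVf ?K0 // mulr1.
      by rewrite mulrDr; ring.
    move: he; rewrite /=; simpl in *; lia.
    move: hc he; rewrite /=; simpl in *; lia.
- rewrite mul_tI /=; case: R hx he hc => [|d R] hx he hc.
  + exists (c :: L), 0, [::]; split; [|split].
      by rewrite hx /= !addr0 add0r mulrC.
    move: he; rewrite /=; simpl in *; lia.
    move: hc he; rewrite /=; simpl in *; lia.
  + exists (c :: L), d, R; split; [|split].
      rewrite hx /=; field; exact: K0.
    move: he; rewrite /=; simpl in *; lia.
    move: hc he; rewrite /=; simpl in *; lia.
Qed.

Lemma good_word w : Good (size w) (word_eval k w).
Proof.
elim: w => [|l w IH]; first exact: good_nil.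
by rewrite ev_cons; apply: good_cons.
Qed.


Lemma kZ : ((k%:Z)%:~R : rat) = K.
Proof. by []. Qed.

Definition dval (ds : seq int) : int := foldr (fun d acc => d + (k%:Z) * acc) 0 ds.

Lemma dval_cat s1 s2 : dval (s1 ++ s2) = dval s1 + (k%:Z) ^+ (size s1) * dval s2.
Proof.
elim: s1 => [|d s1 IH] /=; first by rewrite add0r expr0 mul1r.
by rewrite IH exprS; ring.
Qed.

Lemma rval_dval R : rval R = K * (dval R)%:~R.
Proof.
elim: R => [|d R IH] /=; first by rewrite mulr0.
by rewrite IH rmorphD rmorphM /= kZ.
Qed.

Lemma lval_dval L : K ^+ (size L) * lval L = (dval (rev L))%:~R.
Proof.
elim: L => [|d L IH] /=; first by rewrite mulr0.
rewrite rev_cons -cats1 dval_cat /= size_rev.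
rewrite mulr0 addr0 rmorphD rmorphM rmorphXn /= kZ -IH exprS.
field; exact: K0.
Qed.

Lemma sabs_cat s1 s2 : sabs (s1 ++ s2) = (sabs s1 + sabs s2)%N.
Proof. by elim: s1 => //= d s1 ->; rewrite addnA. Qed.

Lemma sabs_rev s : sabs (rev s) = sabs s.
Proof.
elim: s => //= d s IH; rewrite rev_cons -cats1 sabs_cat IH /=; lia.
Qed.

Lemma good_final m x : Good m (x, 0) ->
  exists (j : nat) (ds : seq int), K ^+ j * x = (dval ds)%:~R /\
     (sabs ds + 2 * size ds <= m + 2)%N.
Proof.
move=> [L [c [R [/= hx [he hc]]]]].
exists (size L), (rev L ++ c :: R); split.
  rewrite hx dval_cat /= rmorphD rmorphM rmorphD rmorphM /= rmorphXn /= !kZ.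
  rewrite -lval_dval size_rev -rval_dval; ring.
rewrite sabs_cat sabs_rev /= size_cat size_rev /=.
move: hc; rewrite /=; lia.
Qed.

End P1.


Record St := mkSt { sa0 : seq int; sa1 : seq int; sa2 : seq int;
                    sdp : seq int; sdm : seq int }.

Section P2.
Variable k : nat.
Local Notation kz := (k%:Z).

Definition stepF (s : St) : St :=
  let dp' := map (fun y => kz * y) (sa1 s) ++ map (fun z => 1 + z) (sdp s) in
  let dm' := map (fun y => -1 + kz * y) (sa2 s) ++ map (fun z => -1 + z) (sdm s) in
  mkSt (0 :: dp' ++ dm') (sa0 s) (sa1 s) dp' dm'.

Fixpoint F (m : nat) : St :=
  if m is m'.+1 then stepF (F m') else mkSt [:: 0] [::] [::] [::] [::].

Definition Aset m := sa0 (F m).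

Lemma A0_in m : 0 \in Aset m.
Proof. by case: m => [|m]; rewrite /Aset /= inE eqxx. Qed.

Lemma Dp_sub m x : x \in sdp (F m) -> x \in Aset m.
Proof. by case: m => [//|m] h; rewrite /Aset /= inE mem_cat h orbT. Qed.

Lemma Dm_sub m x : x \in sdm (F m) -> x \in Aset m.
Proof. by case: m => [//|m] h; rewrite /Aset /= inE mem_cat h !orbT. Qed.

Lemma Dp_in y m n : y \in Aset m -> (n%:Z + kz * y) \in sdp (F (m + 2 + n)).
Proof.
move=> hy; elim: n => [|n IH].
  by rewrite addn0 add0r addn2 /= mem_cat; apply/orP; left; apply/map_f.
rewrite addnS /= mem_cat; apply/orP; right.
have -> : (n.+1%:Z + kz * y) = 1 + (n%:Z + kz * y) by rewrite -addn1 PoszD; ring.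
exact: map_f.
Qed.

Lemma Dm_in y m n : y \in Aset m -> (- n.+1%:Z + kz * y) \in sdm (F (m + 3 + n)).
Proof.
move=> hy; elim: n => [|n IH].
  by rewrite addn0 addn3 /= mem_cat; apply/orP; left; apply/map_f.
rewrite addnS /= mem_cat; apply/orP; right.
have -> : (- n.+2%:Z + kz * y) = -1 + (- n.+1%:Z + kz * y).
  by rewrite -[n.+2]addn1 PoszD; ring.
exact: map_f.
Qed.

Lemma addA y m d : y \in Aset m -> (d + kz * y) \in Aset (m + 2 + `|d|).
Proof.
move=> hy; case: d => [n|n].
  by apply: Dp_sub; apply: Dp_in.
have -> : (m + 2 + `|Negz n|)%N = (m + 3 + n)%N by rewrite /=; lia.
by apply: Dm_sub; rewrite NegzE; apply: Dm_in.
Qed.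

Fixpoint dval' (ds : seq int) : int :=
  if ds is d :: ds' then d + kz * dval' ds' else 0.
Fixpoint sabs' (s : seq int) : nat :=
  if s is d :: s' then (`|d|%N + sabs' s')%N else 0%N.

Lemma dval_in ds m : (sabs' ds + 2 * size ds <= m)%N -> dval' ds \in Aset m.
Proof.
elim: ds m => [|d ds IH] m /= h; first exact: A0_in.
have -> : m = ((m - 2 - `|d|) + 2 + `|d|)%N by lia.
apply: addA; apply: IH; lia.
Qed.

End P2.

Section P2R.
Variable R : realType.
Variable k : nat.

Definition Inv (m : nat) : Prop :=
  let s := F k m in let P := (19/10 : R) ^+ m in
  [/\ (size (sa0 s))%:R <= P, 19/10 * (size (sa1 s))%:R <= P,
      361/100 * (size (sa2 s))%:R <= P,
      9/10 * 19/10 * (size (sdp s))%:R + 19/10 <= P &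
      9/10 * 361/100 * (size (sdm s))%:R + 361/100 <= P].

Lemma Inv2 : Inv 2.
Proof.
rewrite /Inv /= !expr2; split; lra.
Qed.

Lemma InvS m : Inv m -> Inv m.+1.
Proof.
rewrite /Inv /=; set s := F k m; set P := (19/10 : R) ^+ m.
rewrite exprS -/P !size_cat !size_map !natrD.
have h0 : 0 <= P by apply: exprn_ge0; lra.
have := ler0n R (size (sa0 s)); have := ler0n R (size (sa1 s)).
have := ler0n R (size (sa2 s)); have := ler0n R (size (sdp s)).
have := ler0n R (size (sdm s)).
move=> ? ? ? ? ? [? ? ? ? ?]; split; lra.
Qed.

Lemma Inv_all m : (2 <= m)%N -> Inv m.
Proof.
move=> h; rewrite -(subnK h); elim: (m - 2)%N => [|n IH]; first exact: Inv2.
by rewrite addSn; apply: InvS.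
Qed.

Lemma size_A m : (2 <= m)%N -> (size (Aset k m))%:R <= (19/10 : R) ^+ m.
Proof. by move=> /Inv_all []. Qed.

End P2R.


Local Open Scope classical_set_scope.

Lemma card_le_seq {T X : choiceType} (A : set T) (s : seq X) (f : X -> T) :
  A `<=` [set f x | x in [set` s]] -> (#|` fset_set A| <= size s)%N.
Proof.
move=> AB.
have [fA|nfA] := pselect (finite_set A); last first.
  by rewrite /fset_set; case: pselect.
have sub : (fset_set A `<=` [fset f x | x in s])%fset.
  apply/fsubsetP => t; rewrite in_fset_set // inE => /AB [x xs <-].
  by apply/imfsetP; exists x.
apply: leq_trans (fsubset_leq_card sub) _.
apply: leq_trans (leq_imfset_card _ _ _) _.
by rewrite /enum_finmem /= size_undup.
Qed.

Lemma card_ge_seq {T X : choiceType} {A : set T} {s : seq X} {f : X -> T} :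
  finite_set A -> uniq s -> {in s &, injective f} -> (forall x, x \in s -> A (f x)) ->
  (size s <= #|` fset_set A|)%N.
Proof.
move=> fA us inj hA.
have sub : ([fset f x | x in s] `<=` fset_set A)%fset.
  apply/fsubsetP => t /imfsetP [x /= xs ->].
  by rewrite in_fset_set // inE; apply: hA.
apply: leq_trans (fsubset_leq_card sub).
rewrite card_in_imfset; last by move=> x y xs ys; apply: inj.
by rewrite /enum_finmem /= undup_id.
Qed.

Section P3.
Variable k : nat.
Hypothesis k3 : (3 <= k)%N.
Local Notation K := (k%:R : rat).

Lemma KK0 : K != 0.
Proof. by rewrite pnatr_eq0 -lt0n (leq_trans _ k3). Qed.

Lemma conj_expl x : conjclass k (x, 0) = [set p | exists j : int, p = (K ^ j * x, 0)].
Proof.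
apply/seteqP; split => p /=.
  move=> [[h1 h2] _ <-]; exists h2; rewrite /bs_mul /bs_inv /= !addr0.
  rewrite subrr; congr (_, _).
  rewrite mulrN mulrA -expfzDr ?KK0 // subrr expr0z mul1r; ring.
move=> [j ->]; exists (0, j).
  by exists 0, 0%N; rewrite /= mul0r.
rewrite /bs_mul /bs_inv /= !addr0 subrr mulr0 oppr0 mulr0 addr0 add0r.
by [].
Qed.

Lemma conj_shift x (l : int) : conjclass k (K ^ l * x, 0) = conjclass k (x, 0).
Proof.
rewrite !conj_expl; apply/seteqP; split => p /= [j ->].
  by exists (j + l); rewrite mulrA -expfzDr ?KK0.
by exists (j - l); rewrite mulrA -expfzDr ?KK0 // subrK.
Qed.

Lemma g_in_class g : conjclass k g g.
Proof.
exists bs_one; first by exists 0, 0%N; rewrite /= mul0r.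
case: g => x e; rewrite /bs_mul /bs_inv /bs_one /= !mulr0 oppr0 !addr0 add0r.
by rewrite expr0z mul1r add0r.
Qed.

Lemma dval_eq ds : dval k ds = dval' k ds.
Proof. by elim: ds => //= d ds ->. Qed.
Lemma sabs_eq ds : sabs ds = sabs' ds.
Proof. by elim: ds => //= d ds ->. Qed.

Lemma classes0_sub n :
  classes0 k n `<=` [set (fun y : int => conjclass k (y%:~R, 0)) y | y in [set` Aset k (n + 2)]].
Proof.
move=> C [g [_ [-> [sub [[w [sw hw]] _]]]]].
have := sub _ (g_in_class g); case: g hw sub => x e hw sub [_ /= e0]; subst e.
move: hw; rewrite conj_expl /= => -[j hj].
have := @good_word k k3 w; rewrite hj sw => /(@good_final k k3) [i [ds [h1 h2]]].
exists (dval k ds); first by rewrite /= dval_eq; apply: dval_in; rewrite -sabs_eq.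
rewrite /= -h1 mulrA -[K ^+ i]/(K ^ (i%:Z)) -expfzDr ?KK0 //.
by rewrite conj_shift conj_expl.
Qed.

Lemma c0_le n : (c0 k n <= size (Aset k (n + 2)))%N.
Proof. exact: card_le_seq (classes0_sub n). Qed.
End P3.


Lemma not_mult (k : nat) (a b e : int) : (3 <= k)%N -> e != 0 -> -3 < e < 3 ->
  e + k%:Z * a = k%:Z * b -> False.
Proof.
move=> k3 he1 he2 h.
have hd : k%:Z * (b - a) = e by rewrite mulrBr -h; ring.
move: hd; set d := b - a => hd.
have : (d <= -1) \/ (d = 0) \/ (1 <= d) by lia.
case=> [hd1|[hd0|hd1]].
- have : (k%:Z - 3) * (- d - 1) >= 0 by apply: mulr_ge0; lia.
  lia.
- by move: hd; rewrite hd0 mulr0; lia.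
- have : (k%:Z - 3) * (d - 1) >= 0 by apply: mulr_ge0; lia.
  lia.
Qed.

Record St3 := mkSt3 { t0 : seq int; t1 : seq int; t2 : seq int }.

Section P4.
Variable k : nat.
Hypothesis k3 : (3 <= k)%N.
Local Notation kz := (k%:Z).
Local Notation K := (k%:R : rat).

Definition Ulist (s : seq int) : seq int :=
  map (fun y => 1 + kz * y) s ++ map (fun y => -1 + kz * y) s.

Definition stepT (s : St3) : St3 :=
  mkSt3 (map (fun y => kz * y) (t1 s) ++ Ulist (t2 s)) (t0 s) (t1 s).

Fixpoint FT (m : nat) : St3 :=
  if m is m'.+1 then stepT (FT m') else mkSt3 [:: 0] [::] [::].

Lemma ev_app w s e0 : word_eval k s = (0, e0) ->
  word_eval k (w ++ s) = ((word_eval k w).1, (word_eval k w).2 + e0).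
Proof.
move=> hs; elim: w => [|l w IH]; first by rewrite /= hs add0r.
rewrite cat_cons !ev_cons IH; case: l.
- by rewrite !mul_a /= ?addrA.
- by rewrite !mul_aI /= ?addrA.
- by rewrite !mul_t /= ?addrA.
- by rewrite !mul_tI /= ?addrA.
Qed.

Lemma ev_tI : word_eval k [:: LtI] = (0, -1).
Proof. by rewrite /= mul_tI /= mulr0 addr0. Qed.

Definition Wd (m : nat) (y : int) :=
  exists w, size w = m /\ word_eval k w = (y%:~R, 0).

Lemma Wd_t m y : Wd m y -> Wd m.+2 (kz * y).
Proof.
move=> [w [sw hw]]; exists (Lt :: w ++ [:: LtI]); split.
  by rewrite /= size_cat sw addn1.
rewrite ev_cons (@ev_app w [:: LtI] (-1) ev_tI) hw /= mul_t /= rmorphM /=.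
by congr (_, _); lia.
Qed.

Lemma Wd_a m y : Wd m y -> Wd m.+1 (1 + y).
Proof.
move=> [w [sw hw]]; exists (La :: w); split; first by rewrite /= sw.
by rewrite ev_cons hw mul_a /= rmorphD.
Qed.

Lemma Wd_aI m y : Wd m y -> Wd m.+1 (-1 + y).
Proof.
move=> [w [sw hw]]; exists (LaI :: w); split; first by rewrite /= sw.
by rewrite ev_cons hw mul_aI /= rmorphD.
Qed.

Definition InvW m :=
  [/\ forall y, y \in t0 (FT m) -> Wd m y,
      forall y, y \in t1 (FT m) -> Wd m.-1 y /\ (0 < m)%N &
      forall y, y \in t2 (FT m) -> Wd m.-2 y /\ (1 < m)%N].

Lemma InvW_all m : InvW m.
Proof.
elim: m => [|m [h0 h1 h2]].
  split => // y; rewrite inE => /eqP ->; exists [::]; split => //.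
split => /=.
- move=> y; rewrite mem_cat => /orP [/mapP [z /h1 [hz mp] ->]|].
    by case: m mp hz h0 h1 h2 => // m _ hz _ _ _; apply: Wd_t.
  rewrite mem_cat => /orP [] /mapP [z /h2 [hz mp] ->];
    case: m mp hz h0 h1 h2 => [|[|m]] // _ hz _ _ _.
    by apply: Wd_a; apply: Wd_t.
  by apply: Wd_aI; apply: Wd_t.
- by move=> y /h0 hy.
- by move=> y /h1 [hy mp]; case: m mp hy {h0 h1 h2}.
Qed.

Lemma Wd_U m y : y \in Ulist (t2 (FT m)) -> Wd m.+1 y.
Proof.
by move=> hy; case: (InvW_all m.+1) => h0 _ _; apply: h0; rewrite /= mem_cat hy orbT.
Qed.

Lemma disj (f g : int -> int) s1 s2 : (forall a b, f a != g b) ->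
  ~~ has (mem (map f s1)) (map g s2).
Proof.
move=> H; apply/hasPn => x /mapP [b _ ->]; apply/mapP => [[a _ e]].
by move: (H a b); rewrite e eqxx.
Qed.

Lemma kz_inj : injective (fun y : int => kz * y).
Proof. by apply: mulfI; lia. Qed.

Lemma uniq_FT m : [/\ uniq (t0 (FT m)), uniq (t1 (FT m)) & uniq (t2 (FT m))].
Proof.
elim: m => [|m [u0 u1 u2]] //=; split => //.
rewrite cat_uniq /Ulist cat_uniq.
have i1 : injective (fun y : int => 1 + kz * y).
  by move=> x y /= h; apply: kz_inj; apply: (addrI 1); exact: h.
have i2 : injective (fun y : int => -1 + kz * y).
  by move=> x y /= h; apply: kz_inj; apply: (addrI (-1)); exact: h.
rewrite (map_inj_uniq i1) (map_inj_uniq i2) (map_inj_uniq kz_inj).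
rewrite u1 u2 /= has_cat !andbT; apply/andP; split; last first.
  apply: disj => a b; apply/eqP => e.
  by apply: (@not_mult k a b 2) => //; lia.
apply/norP; split; apply: disj => a b; apply/eqP => e.
  by apply: (@not_mult k b a 1) => //; lia.
by apply: (@not_mult k a b 1) => //; lia.
Qed.


Lemma size_Ulist s : size (Ulist s) = (2 * size s)%N.
Proof. by rewrite /Ulist size_cat !size_map mul2n addnn. Qed.

End P4.

Section P4R.
Variable R : realType.
Variable k : nat.

Definition InvT (m : nat) : Prop :=
  let s := FT k m in let P := (7/5 : R) ^+ m in
  [/\ P / 4 <= (size (t0 s))%:R, P / 4 <= 7/5 * (size (t1 s))%:R &
      P / 4 <= 49/25 * (size (t2 s))%:R].

Lemma InvT5 : InvT 5.
Proof.
rewrite /InvT /=.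
rewrite !exprS expr0; split; lra.
Qed.

Lemma InvTS m : InvT m -> InvT m.+1.
Proof.
rewrite /InvT /=; set s := FT k m; set P := (7/5 : R) ^+ m.
rewrite exprS -/P size_cat size_Ulist size_map natrD natrM.
have h0 : 0 <= P by apply: exprn_ge0; lra.
move=> [? ? ?]; split; lra.
Qed.

Lemma InvT_all m : (5 <= m)%N -> InvT m.
Proof.
move=> h; rewrite -(subnK h); elim: (m - 5)%N => [|n IH]; first exact: InvT5.
by rewrite addSn; apply: InvTS.
Qed.

Lemma size_U m : (5 <= m)%N ->
  25/98 * (7/5 : R) ^+ m <= (size (Ulist k (t2 (FT k m))))%:R.
Proof.
move=> /InvT_all [_ _ h]; rewrite size_Ulist natrM; lra.
Qed.

End P4R.


Lemma sum_split (X T : choiceType) (A : nat -> set T) (s : seq X) (f : X -> T) n :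
  (forall m, finite_set (A m)) -> uniq s -> {in s &, injective f} ->
  (forall x, x \in s -> exists m, (m <= n)%N /\ A m (f x)) ->
  (size s <= \sum_(m < n.+1) #|` fset_set (A m)|)%N.
Proof.
elim: n s => [|n IH] s fA us inj h.
  rewrite big_ord1; apply: (card_ge_seq (fA 0%N) us inj) => x xs.
  by have [m [m0 hm]] := h x xs; move: m0; rewrite leqn0 => /eqP <-.
rewrite big_ord_recr /=.
set p := fun x => `[< A n.+1 (f x) >].
rewrite -(count_predC p s) addnC -!size_filter; apply: leq_add; last first.
  apply: card_ge_seq => //; first exact: filter_uniq.
    by move=> x y; rewrite !mem_filter => /andP [_ xs] /andP [_ ys]; apply: inj.
  by move=> x; rewrite mem_filter /p => /andP [/asboolP].
apply: IH => //; first exact: filter_uniq.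
  by move=> x y; rewrite !mem_filter => /andP [_ xs] /andP [_ ys]; apply: inj.
move=> x; rewrite mem_filter => /andP [/= hp xs].
have [m [mn hm]] := h x xs; exists m; split => //.
rewrite leq_eqVlt in mn; case/orP: mn => [/eqP e|]; last by rewrite ltnS.
exfalso; move: hp hm; rewrite e /p /= => /asboolPn hp hm; exact: hp hm.
Qed.

Section P5.
Variable k : nat.
Hypothesis k3 : (3 <= k)%N.
Local Notation kz := (k%:Z).
Local Notation K := (k%:R : rat).

Definition CY (y : int) := conjclass k ((y%:~R : rat), 0).

Lemma Zinvk_pow (j : int) (y : int) : Zinvk k (K ^ j * y%:~R).
Proof.
case: j => n.
  exists (kz ^+ n * y), 0%N.
  by rewrite expr0 divr1 rmorphM rmorphXn /= kZ.
exists y, n.+1; rewrite NegzE -exprnN mulrC.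
by [].
Qed.

Lemma CY_mem n y : Wd k n y -> exists m, (m <= n)%N /\ classes0 k m (CY y).
Proof.
move=> [w [sw hw]].
have ex : exists m, `[< exists w, size w = m /\ CY y (word_eval k w) >].
  exists n; apply/asboolP; exists w; split => //; rewrite hw; exact: g_in_class.
case: (ex_minnP ex) => m /asboolP hm hmin.
exists m; split.
  apply: hmin; apply/asboolP; exists w; split => //; rewrite hw; exact: g_in_class.
exists ((y%:~R : rat), 0); split; first by exists y, 0%N; rewrite /= expr0 divr1.
split => //; split.
  move=> p; rewrite /CY conj_expl // => -[j ->]; split => //; exact: Zinvk_pow.
split => // w' hw'; apply: hmin; apply/asboolP; exists w'; split => //.
Qed.

Definition nk (y : int) := exists e a, (e = 1 \/ e = -1) /\ y = e + kz * a.

Lemma nk_mult y c : nk y -> y = kz * c -> False.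
Proof.
move=> [e [a [he ->]]] h; apply: (@not_mult k a c e) => //; case: he => ->; lia.
Qed.

Lemma CY_inj y y' : nk y -> nk y' -> CY y = CY y' -> y = y'.
Proof.
move=> ny ny' E.
have : CY y ((y'%:~R : rat), 0) by rewrite E; exact: g_in_class.
rewrite /CY conj_expl // => -[j [hj]].
case: j hj => [[|n]|n] hj.
- by move: hj; rewrite expr0z mul1r => /intr_inj.
- exfalso; apply: (@nk_mult y' (kz ^+ n * y) ny').
  apply: (@intr_inj rat); rewrite hj !rmorphM rmorphXn /= kZ.
  rewrite -[K ^ n.+1]/(K ^+ n.+1) exprS; ring.
- exfalso; apply: (@nk_mult y (kz ^+ n * y') ny).
  have hK : K ^+ n.+1 != 0 by rewrite expf_neq0 // KK0.
  apply: (@intr_inj rat); rewrite !rmorphM rmorphXn /= kZ hj NegzE -exprnN.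
  rewrite mulrA -exprS mulrA mulfV // mul1r //.
Qed.

Lemma nk_U s y : y \in Ulist k s -> nk y.
Proof.
rewrite mem_cat => /orP [] /mapP [a _ ->].
  by exists 1, a; split => //; left.
by exists (-1), a; split => //; right.
Qed.

Lemma classes0_fin m : finite_set (classes0 k m).
Proof.
apply: (sub_finite_set (@classes0_sub k k3 m)).
by apply: finite_image; exact: finite_seq.
Qed.

Lemma sum_c0_ge m :
  (size (Ulist k (t2 (FT k m))) <= \sum_(j < m.+2) c0 k j)%N.
Proof.
apply: (@sum_split _ _ (classes0 k) _ CY m.+1).
- exact: classes0_fin.
- by case: (@uniq_FT k k3 m.+1) => /=; rewrite cat_uniq => /and3P [].
- by move=> x y xs ys; apply: CY_inj; apply: nk_U; eassumption.
- by move=> y ys; apply: CY_mem; apply: Wd_U.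
Qed.

End P5.


Section P6.
Variable R : realType.

Lemma root_le (x a : R) (n : nat) : (0 < n)%N -> 0 <= x -> 0 <= a -> x <= a ^+ n ->
  x `^ (n%:R^-1) <= a.
Proof.
move=> n0 x0 a0 h.
have r0 : 0 <= (n%:R : R)^-1 by rewrite invr_ge0.
apply: le_trans (ge0_ler_powR r0 _ _ h) _; rewrite ?nnegrE ?exprn_ge0 //.
rewrite -powR_mulrn // -powRrM mulfV ?powRr1 //.
by rewrite pnatr_eq0 -lt0n.
Qed.

Lemma root_ge (x a : R) (n : nat) : (0 < n)%N -> 0 <= x -> 0 <= a -> a ^+ n <= x ->
  a <= x `^ (n%:R^-1).
Proof.
move=> n0 x0 a0 h.
have r0 : 0 <= (n%:R : R)^-1 by rewrite invr_ge0.
apply: le_trans (ge0_ler_powR r0 _ _ h); rewrite ?nnegrE ?exprn_ge0 //.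
rewrite -powR_mulrn // -powRrM mulfV ?powRr1 //.
by rewrite pnatr_eq0 -lt0n.
Qed.

Lemma bernoulli (x : R) (n : nat) : 0 <= x -> 1 + n%:R * x <= (1 + x) ^+ n.
Proof.
move=> x0; elim: n => [|n IH]; first by rewrite mul0r addr0 expr0.
rewrite exprS -natr1.
have h1 : 0 <= (1 + x) ^+ n by apply: exprn_ge0; lra.
have h2 : 0 <= n%:R * x by rewrite mulr_ge0.
nra.
Qed.

Lemma oo_ge (V : set nat) : \oo V -> exists N, forall n, (N <= n)%N -> V n.
Proof. by move=> [N _ hN]; exists N => n /hN. Qed.

Lemma limsup_le (u : nat -> \bar R) (l : R) N :
  (forall n, (N <= n)%N -> (u n <= l%:E)%E) -> (limn_esup u <= l%:E)%E.
Proof.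
move=> h; rewrite /limn_esup /limf_esup.
apply: (@le_trans _ _ (ereal_sup (u @` [set n | (N <= n)%N]))).
  apply: ereal_inf_lbound; exists [set n | (N <= n)%N] => //.
  exact: nbhs_infty_ge.
by apply: ge_ereal_sup => _ [n /= hn <-]; apply: h.
Qed.

Lemma limsup_ge (u : nat -> \bar R) (l : R) :
  (forall N, exists n, (N <= n)%N /\ (l%:E <= u n)%E) -> (l%:E <= limn_esup u)%E.
Proof.
move=> h; rewrite /limn_esup /limf_esup.
apply: le_ereal_inf_tmp => _ [V hV <-].
have [N hN] := @oo_ge V hV.
have [n [hn hl]] := h N.
apply: le_trans hl _; apply: ereal_sup_ubound; exists n => //; exact: hN.
Qed.

End P6.


Section P7.
Variable R : realType.
Variable k : nat.
Hypothesis k3 : (3 <= k)%N.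

Lemma c0_upper n : (56 <= n)%N -> (c0 k n)%:R <= (199/100 : R) ^+ n.
Proof.
move=> hn.
apply: (@le_trans _ _ (size (Aset k (n + 2)))%:R).
  by rewrite ler_nat; apply: c0_le.
have hA := @size_A R k (n + 2) ltac:(lia).
apply: le_trans hA _.
have -> : (199/100 : R) = 19/10 * (1 + 9/190) by lra.
rewrite [X in _ <= X]exprMn exprD.
have hb := @bernoulli R (9/190) n ltac:(lra).
have hP : 0 <= (19/10 : R) ^+ n by apply: exprn_ge0; lra.
have hn' : (56 : R) <= n%:R by rewrite (ler_nat R 56 n).
rewrite expr2; apply: (ler_wpM2l hP).
lra.
Qed.

Lemma growth_upper : (limn_esup (fun n => (((c0 k n)%:R : R) `^ (n%:R^-1))%:E)
   <= (199/100 : R)%:E)%E.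
Proof.
apply: (@limsup_le R _ _ 56) => n hn; rewrite lee_fin.
apply: root_le; [lia| exact: ler0n| lra| exact: c0_upper].
Qed.

Lemma claim_sum N (hlt : forall n, (N <= n)%N -> (c0 k n)%:R < (27/20 : R) ^+ n) M :
  (N <= M)%N -> \sum_(j < M) ((c0 k j)%:R : R) <=
     \sum_(j < N) ((c0 k j)%:R : R) + 20/7 * (27/20) ^+ M.
Proof.
move=> hM; rewrite -(subnK hM); elim: (M - N)%N => [|d IH].
  rewrite add0n lerDl; apply: mulr_ge0; [lra| apply: exprn_ge0; lra].
rewrite addSn big_ord_recr /=.
have := hlt (d + N)%N (leq_addl _ _).
rewrite exprS; lra.
Qed.

Lemma final_arith (b s0 sm sz y z x B : R) :
  692/27 * B + z / 27 + 110/27 * y <= x -> s0 <= y -> 0 <= z ->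
  25/98 * x <= sz -> sz <= sm -> sm <= s0 + 20/7 * (B * (729/400)) ->
  1 <= B -> 0 <= s0 -> False.
Proof. move=> *; lra. Qed.

Lemma e1_lem m : (7/5 : R) ^+ m = (27/20) ^+ m * (1 + 1/27) ^+ m.
Proof. by rewrite -exprMn; congr (_ ^+ _); lra. Qed.

Lemma e2_lem m : (27/20 : R) ^+ m.+2 = (27/20) ^+ m * (729/400).
Proof. by rewrite exprSr exprSr -mulrA; congr (_ * _); lra. Qed.

Lemma h2720 : (1 : R) <= 27/20. Proof. lra. Qed.
Lemma h127 : (0 : R) <= 1/27. Proof. lra. Qed.

Lemma freq N : exists n, (N <= n)%N /\ (27/20 : R) ^+ n <= (c0 k n)%:R.
Proof.
case: (pselect (exists n, (N <= n)%N /\ (27/20 : R) ^+ n <= (c0 k n)%:R)) => // hno.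
exfalso.
have hlt : forall n, (N <= n)%N -> (c0 k n)%:R < (27/20 : R) ^+ n.
  move=> n hn; rewrite ltNge; apply/negP => hge; apply: hno; exists n; split => //.
have [S0n hS0n] : exists S0n, S0n = (\sum_(j < N) c0 k j)%N by eexists.
have [m hm] : exists m, m = (N + 5 + 110 * (S0n + 6))%N by eexists.
have hm5 : (5 <= m)%N by rewrite hm; lia.
have hNm : (N <= m.+2)%N by rewrite hm; lia.
have h1 := @size_U R k m hm5.
have h2 := @sum_c0_ge k k3 m.
have h5 := @claim_sum N hlt m.+2 hNm.
have h4 : (size (Ulist k (t2 (FT k m))))%:R <= \sum_(j < m.+2) ((c0 k j)%:R : R).
  by rewrite -natr_sum ler_nat.
have hS : \sum_(j < N) ((c0 k j)%:R : R) = S0n%:R by rewrite hS0n natr_sum.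
rewrite hS in h5.
have hB : 1 <= (27/20 : R) ^+ m := exprn_ege1 m h2720.
have hQ := @bernoulli R (1/27) m h127.
rewrite e2_lem in h5; rewrite e1_lem in h1.
move: hB h1 h5 hQ.
move: ((27/20 : R) ^+ m) ((1 + 1/27 : R) ^+ m) => B Q hB h1 h5 hQ.
have hmR : (m%:R : R) = N%:R + 5 + 110 * (S0n%:R + 6).
  by rewrite hm natrD natrM !natrD.
have hS0 : (0 : R) <= S0n%:R by [].
have hN : (0 : R) <= N%:R by [].
have hB0 : 0 <= B by apply: le_trans hB.
have p1 : B * (1 + m%:R * (1/27)) <= B * Q by apply: ler_wpM2l.
have p2 : S0n%:R <= B * S0n%:R by rewrite -[X in X <= _]mul1r; apply: ler_wpM2r.
have p3 : 0 <= B * N%:R by apply: mulr_ge0.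
have e : B * (1 + m%:R * (1/27)) = 692/27 * B + (B * N%:R) / 27 + 110/27 * (B * S0n%:R).
  by rewrite hmR; field.
rewrite e in p1.
exact: (@final_arith 0 _ _ _ _ _ _ _ p1 p2 p3 h1 h4 h5 hB hS0).
Qed.

Lemma growth_lower : ((27/20 : R)%:E <=
   limn_esup (fun n => (((c0 k n)%:R : R) `^ (n%:R^-1))%:E))%E.
Proof.
apply: limsup_ge => N.
have [n [hn h]] := freq N.+1.
exists n; split; first lia.
rewrite lee_fin; apply: root_ge; [lia| exact: ler0n| lra| exact: h].
Qed.

End P7.

Local Close Scope classical_set_scope.

Theorem corollary3p4 (R : realType) (r : nat) (hr : (1 <= r)%N) :
  ((4 / 3 : R)%:E < growth0 R (2 * r + 1) < (2 : R)%:E)%E.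
Proof.
have k3 : (3 <= 2 * r + 1)%N by lia.
apply/andP; split.
  apply: (@lt_le_trans _ _ (27/20 : R)%:E); first by rewrite lte_fin; lra.
  exact: growth_lower.
apply: (@le_lt_trans _ _ (199/100 : R)%:E); first exact: growth_upper.
by rewrite lte_fin; lra.
Qed.
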